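(* Let $R=kQ/I$ be a string algebra with no DOZE. Then any two distinct bands of $(Q,I)$ (up to cyclic permutation and inversion) have at most one vertex in common.
   Context: A string algebra is $R=kQ/I$ with $I$ generated by paths, each vertex having at most two incoming and two outgoing arrows, and for each arrow $\alpha:x\to y$ at most one arrow $\beta$ from $y$ with $\alpha\beta\notin I$ and at most one arrow $\gamma$ into $x$ with $\gamma\alpha\notin I$ (paths composed left to right). A walk is a sequence of arrows and inverse arrows, reduced if no subwalk $\alpha\alpha^{-1}$ or $\alpha^{-1}\alpha$. A string is a reduced walk containing no zero-relation; a band is a cyclic string, not a power of another cyclic string, all of whose powers are strings. A double-zero is a reduced walk $\rho_1\nu\rho_2$ with $\rho_1,\rho_2$ zero-relations (paths in $I$) traversed along their arrows and $\nu$ a walk; a DOZE is a double-zero $\rho_1\omega_1\omega_2\omega_3\rho_2$ with $\omega_1,\omega_3$ walks and $\omega_2$ a band. *)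

(* Defs.v *)
From mathcomp Require Import all_boot.
Set Implicit Arguments. Unset Strict Implicit. Unset Printing Implicit Defensive.

(* A bound quiver (Q, I): vertices V, arrows A (finite types), source/target
   maps s t : A -> V, and I generated by the paths in [rels] (each a sequence
   of arrows, composed left to right). *)
Section StringCombinatorics.
Variables (V A : finType) (s t : A -> V) (rels : seq (seq A)).

Definition is_path (p : seq A) : bool := sorted (fun a b => t a == s b) p.

Definition inI (p : seq A) : bool := has (fun r => infix r p) rels.

Definition zero_rel (p : seq A) : Prop := p <> [::] /\ is_path p /\ inI p.

(* Standing hypotheses: I generated by paths of length >= 2, at most two
   incoming / outgoing arrows per vertex, and the two string conditions. *)
Definition string_algebra : Prop :=
  [/\ all (fun r => (1 < size r) && is_path r) rels,
      forall v : V, #|[set a : A | s a == v]| <= 2,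
      forall v : V, #|[set a : A | t a == v]| <= 2,
      forall al : A, #|[set be : A | (s be == t al) && ~~ inI [:: al; be]]| <= 1
    & forall al : A, #|[set ga : A | (t ga == s al) && ~~ inI [:: ga; al]]| <= 1].

(* letters: (a, true) is the arrow a, (a, false) its formal inverse *)
Definition letter := (A * bool)%type.
Definition lsrc (l : letter) : V := if l.2 then s l.1 else t l.1.
Definition ltgt (l : letter) : V := if l.2 then t l.1 else s l.1.

Definition is_walk (w : seq letter) : bool :=
  sorted (fun l1 l2 => ltgt l1 == lsrc l2) w.

Definition reduced (w : seq letter) : bool :=
  sorted (fun l1 l2 => ~~ ((l1.1 == l2.1) && (l1.2 != l2.2))) w.

Definition dir (p : seq A) : seq letter := [seq (a, true) | a <- p].
Definition inv_walk (w : seq letter) : seq letter :=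
  rev [seq (l.1, ~~ l.2) | l <- w].

Definition contains_zero (w : seq letter) : Prop :=
  exists u1 u u2 rho, w = u1 ++ u ++ u2 /\ zero_rel rho /\
    (u = dir rho \/ u = inv_walk (dir rho)).

Definition is_string (w : seq letter) : Prop :=
  is_walk w /\ reduced w /\ ~ contains_zero w.

Definition closed_walk (w : seq letter) : bool :=
  match w with
  | [::] => false
  | l :: _ => ltgt (last l w) == lsrc l
  end.

Definition wpow (w : seq letter) (n : nat) : seq letter := flatten (nseq n w).

Definition is_band (w : seq letter) : Prop :=
  [/\ w <> [::], closed_walk w,
      (forall n, 0 < n -> is_string (wpow w n))
    & ~ exists c m, 1 < m /\ w = wpow c m].

(* double-zero rho1 nu rho2 with rho1, rho2 zero-relations traversed along
   their arrows; DOZE: nu = om1 om2 om3 with om2 a band *)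
Definition is_DOZE (w : seq letter) : Prop :=
  exists rho1 om1 om2 om3 rho2,
    [/\ w = dir rho1 ++ om1 ++ om2 ++ om3 ++ dir rho2,
        zero_rel rho1, zero_rel rho2, is_band om2
      & is_walk w && reduced w].

Definition has_DOZE : Prop := exists w, is_DOZE w.

Definition verts (w : seq letter) : seq V := [seq lsrc l | l <- w].

Definition band_equiv (b1 b2 : seq letter) : Prop :=
  exists n, b2 = rot n b1 \/ b2 = rot n (inv_walk b1).

End StringCombinatorics.

(* Main.v *)
Require Import Defs.
From mathcomp Require Import all_boot.
From Stdlib Require Import Lia.
Set Implicit Arguments. Unset Strict Implicit. Unset Printing Implicit Defensive.


Definition linv (A : Type) (l : A * bool) : A * bool := (l.1, ~~ l.2).

Lemma linvK (A : Type) (l : A * bool) : linv (linv l) = l.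
Proof. by case: l => a b; rewrite /linv /= negbK. Qed.

Lemma inv_walkE (A : finType) (w : seq (letter A)) : inv_walk w = rev (map (@linv A) w).
Proof. by []. Qed.

Lemma inv_walkK (A : finType) (w : seq (letter A)) : inv_walk (inv_walk w) = w.
Proof.
rewrite !inv_walkE map_rev revK.
by elim: w => //= l w ->; rewrite linvK.
Qed.

Lemma inv_walk_cat (A : finType) (w1 w2 : seq (letter A)) :
  inv_walk (w1 ++ w2) = inv_walk w2 ++ inv_walk w1.
Proof. by rewrite !inv_walkE map_cat rev_cat. Qed.

Lemma inv_walk_cons (A : finType) (l : letter A) (w : seq (letter A)) :
  inv_walk (l :: w) = rcons (inv_walk w) (linv l).
Proof. by rewrite !inv_walkE /= rev_cons. Qed.

Lemma size_inv_walk (A : finType) (w : seq (letter A)) : size (inv_walk w) = size w.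
Proof. by rewrite inv_walkE size_rev size_map. Qed.

Lemma mem_inv_walk (A : finType) (w : seq (letter A)) l :
  (linv l \in inv_walk w) = (l \in w).
Proof.
rewrite inv_walkE mem_rev; apply/mapP/idP => [[m Hm E]|H]; last by exists l.
by have -> : l = m by rewrite -(linvK l) E linvK.
Qed.

Lemma wpowS (A : finType) (w : seq (letter A)) n : wpow w n.+1 = w ++ wpow w n.
Proof. by []. Qed.

Lemma wpowSr (A : finType) (w : seq (letter A)) n : wpow w n.+1 = wpow w n ++ w.
Proof.
elim: n => [|n IH]; first by rewrite /wpow /= cats0.
by rewrite [LHS]wpowS IH catA -wpowS IH.
Qed.

Lemma wpow_inv (A : finType) (w : seq (letter A)) n :
  wpow (inv_walk w) n = inv_walk (wpow w n).
Proof.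
elim: n => [|n IH]; first by [].
by rewrite wpowS wpowSr inv_walk_cat IH.
Qed.

Lemma size_wpow (A : finType) (w : seq (letter A)) n : size (wpow w n) = n * size w.
Proof. elim: n => [|n IH] //; by rewrite wpowS size_cat IH mulSn. Qed.

Lemma nth_wpow (A : finType) (x0 : letter A) (w : seq (letter A)) n i :
  i < n * size w -> nth x0 (wpow w n) i = nth x0 w (i %% size w).
Proof.
elim: n i => [|n IH] i //; rewrite mulSn => Hi.
rewrite wpowS nth_cat.
case: ltnP => H; first by rewrite modn_small.
rewrite IH; last by rewrite -(ltn_add2l (size w)) subnKC.
by rewrite -{2}(subnKC H) modnDl.
Qed.

Lemma inv_rot (A : finType) (w : seq (letter A)) n :
  inv_walk (rot n w) = rot (size w - n) (inv_walk w).
Proof. by rewrite !inv_walkE map_rot rev_rot /rotr size_rev size_map. Qed.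


Definition nb (V A : finType) (s t : A -> V) (l m : letter A) : bool :=
  (ltgt s t l == lsrc s t m) && ~~ ((l.1 == m.1) && (l.2 != m.2)).

Lemma path_andb (T : Type) (r1 r2 : rel T) x w :
  path (fun a b => r1 a b && r2 a b) x w = path r1 x w && path r2 x w.
Proof.
elim: w x => [|y w IH] x //=.
by rewrite IH; case: (r1 x y); case: (r2 x y); case: (path r1 y w).
Qed.

Lemma sorted_nbE (V A : finType) (s t : A -> V) (w : seq (letter A)) :
  sorted (nb s t) w = is_walk s t w && reduced w.
Proof. case: w => [|x w] //=; exact: path_andb. Qed.

Lemma wpow2 (A : finType) (b : seq (letter A)) : wpow b 2 = b ++ b.
Proof. by rewrite /wpow /= cats0. Qed.

Lemma band_sorted2 (V A : finType) (s t : A -> V) rels (b : seq (letter A)) :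
  is_band s t rels b -> sorted (nb s t) (b ++ b).
Proof.
case=> _ _ Hs _; have [Hw [Hr _]] := Hs 2 isT.
by rewrite sorted_nbE -wpow2 Hw Hr.
Qed.

Definition zok (A : finType) (rels : seq (seq A)) (e m : letter A) : bool :=
  ~~ [&& e.2, m.2 & inI rels [:: e.1; m.1]] &&
  ~~ [&& ~~ e.2, ~~ m.2 & inI rels [:: m.1; e.1]].

Definition trans (A : finType) (b : seq (letter A)) (e m : letter A) : Prop :=
  exists s1 s2, b ++ b = s1 ++ e :: m :: s2.

Lemma band_trans (V A : finType) (s t : A -> V) rels (b : seq (letter A)) e m :
  is_band s t rels b -> trans b e m ->
  [/\ nb s t e m, zok rels e m, e \in b & m \in b].
Proof.
move=> Hb [s1 [s2 E]].
have Hs := band_sorted2 Hb.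
have Hnb : nb s t e m.
  by move: Hs; rewrite E => /cat_sorted2 [_] /= /andP [].
have Hmem : forall x, x \in b ++ b -> x \in b by move=> x; rewrite mem_cat orbb.
split => //; last first.
- by apply: Hmem; rewrite E mem_cat !inE eqxx !orbT.
- by apply: Hmem; rewrite E mem_cat !inE eqxx !orbT.
case: Hb => _ _ Hstr _; have [_ [_ Hnz]] := Hstr 2 isT.
move: Hnb; case: e E => [g d]; case: m => [h d'] E Hnb.
rewrite /zok /=; apply/andP; split; apply/negP.
- case/and3P=> H1 H2 H3; apply: Hnz; exists s1, [:: (g, d); (h, d')], s2, [:: g; h].
  rewrite wpow2 E; split => //; split.
  + split => //; split => //; rewrite /is_path /=.
    by move: Hnb; rewrite /nb /lsrc /ltgt /= H1 H2 andbT => /andP [].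
  + by left; rewrite /dir /= H1 H2.
- case/and3P=> H1 H2 H3; apply: Hnz; exists s1, [:: (g, d); (h, d')], s2, [:: h; g].
  rewrite wpow2 E; split => //; split.
  + split => //; split => //; rewrite /is_path /=.
    move: Hnb; rewrite /nb /lsrc /ltgt /= (negbTE H1) (negbTE H2) andbT.
    by move/andP => [/eqP -> _].
  + right; rewrite /dir /inv_walk /=.
    by rewrite (negbTE H1) (negbTE H2).
Qed.

Lemma trans_inv (A : finType) (b : seq (letter A)) e m :
  trans b e m -> trans (inv_walk b) (linv m) (linv e).
Proof.
case=> s1 [s2 E]; exists (inv_walk s2), (inv_walk s1).
rewrite -inv_walk_cat E inv_walk_cat !inv_walk_cons.
by rewrite -!cats1 -!catA.
Qed.


Lemma sorted_inv (A : finType) (r r' : rel (letter A)) (w : seq (letter A)) :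
  (forall a b, r a b -> r' (linv b) (linv a)) -> sorted r w -> sorted r' (inv_walk w).
Proof. move=> H; rewrite inv_walkE rev_sorted sorted_map; apply: sub_sorted => a b /H. by []. Qed.

Lemma inv_dir_inv (A : finType) (w : seq (letter A)) (rho : seq A) :
  (w = dir rho \/ w = inv_walk (dir rho)) ->
  (inv_walk w = dir rho \/ inv_walk w = inv_walk (dir rho)).
Proof. by case=> ->; [right | left; rewrite inv_walkK]. Qed.

Lemma string_inv (V A : finType) (s t : A -> V) rels (w : seq (letter A)) :
  is_string s t rels w -> is_string s t rels (inv_walk w).
Proof.
case=> Hw [Hr Hz]; split; [|split].
- apply: sorted_inv Hw => a b; rewrite /lsrc /ltgt /linv /=.
  by case: a.2; case: b.2 => //= /eqP ->.
- apply: sorted_inv Hr => a b; rewrite /linv /=.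
  by case: a.2; case: b.2; rewrite //= eq_sym.
- case=> u1 [u [u2 [rho [E [Hz' Hu]]]]]; apply: Hz.
  exists (inv_walk u2), (inv_walk u), (inv_walk u1), rho; split; last split => //.
  + by rewrite -(inv_walkK w) E !inv_walk_cat catA.
  + exact: inv_dir_inv.
Qed.

Lemma closed_inv (V A : finType) (s t : A -> V) (b : seq (letter A)) :
  closed_walk s t b -> closed_walk s t (inv_walk b).
Proof.
case: (lastP b) => [|c y] //.
have -> : inv_walk (rcons c y) = linv y :: inv_walk c.
  by rewrite inv_walkE map_rcons rev_rcons.
case: c => [|z c] /=.
  by rewrite /lsrc /ltgt /linv /=; case: y.2; rewrite eq_sym.
rewrite inv_walk_cons last_rcons last_rcons.
by rewrite /lsrc /ltgt /linv /=; case: y.2; case: z.2; rewrite eq_sym.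
Qed.

Lemma band_inv (V A : finType) (s t : A -> V) rels (b : seq (letter A)) :
  is_band s t rels b -> is_band s t rels (inv_walk b).
Proof.
case=> Hne Hc Hs Hp; split.
- by move=> E; apply: Hne; rewrite -(inv_walkK b) E.
- exact: closed_inv.
- by move=> n Hn; rewrite wpow_inv; apply: string_inv; apply: Hs.
- case=> c [m [Hm E]]; apply: Hp; exists (inv_walk c), m; split => //.
  by rewrite wpow_inv -E inv_walkK.
Qed.


Definition reach1 (V A : finType) (s t : A -> V) (x y : letter A) : Prop :=
  exists p, path (nb s t) x (rcons p y).

Lemma reach1_edge (V A : finType) (s t : A -> V) x y : nb s t x y -> reach1 s t x y.
Proof. by move=> H; exists [::]; rewrite /= H. Qed.

Lemma reach1_trans (V A : finType) (s t : A -> V) x y z :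
  reach1 s t x y -> reach1 s t y z -> reach1 s t x z.
Proof.
case=> p Hp [q Hq]; exists (p ++ y :: q).
by rewrite rcons_cat rcons_cons -cat_rcons cat_path Hp last_rcons.
Qed.

Lemma band_reach (V A : finType) (s t : A -> V) rels (b : seq (letter A)) x y :
  is_band s t rels b -> x \in b -> y \in b -> reach1 s t x y.
Proof.
move=> Hb Hx Hy; have Hs := band_sorted2 Hb.
set i := index x b; set j := index y b.
have Hi : i < size b by rewrite index_mem.
have Hj : j < size b by rewrite index_mem.
exists (drop i.+1 b ++ take j b).
rewrite -cats1 -catA cats1 -[y in rcons _ y](nth_index x Hy) -take_nth //.
have E : b ++ b = take i b ++ (nth x b i :: (drop i.+1 b ++ take j.+1 b)) ++ drop j.+1 b.
  by rewrite -cat_cons -drop_nth // catA catA cat_take_drop -catA cat_take_drop.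
move: Hs; rewrite E nth_index // => /cat_sorted2 [_] /cat_sorted2 [].
by [].
Qed.

Lemma doze_assembly (V A : finType) (s t : A -> V) rels (r1 r2 : seq A)
    (b : seq (letter A)) x0 :
  zero_rel s t rels r1 -> zero_rel s t rels r2 -> is_band s t rels b ->
  reach1 s t (last x0 (dir r1)) (last x0 b) ->
  reach1 s t (last x0 b) (head x0 (dir r2)) ->
  has_DOZE s t rels.
Proof.
move=> Z1 Z2 Hb [p1 H1] [p3 H3].
have Hs := band_sorted2 Hb.
case: (Z1) => Hne1 [Hp1 _]; case: (Z2) => Hne2 [Hp2 _].
case: b Hb Hs H1 H3 => [[] //|x b'] Hb Hs H1 H3.
case: r1 Z1 Hne1 Hp1 H1 => [//|a r1'] Z1 _ Hp1 H1.
case: r2 Z2 Hne2 Hp2 H3 => [//|c r2'] Z2 _ Hp2 H3.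
exists (dir (a :: r1') ++ rcons p1 (last x0 (x :: b')) ++ (x :: b') ++ p3 ++ dir (c :: r2')).
exists (a :: r1'), (rcons p1 (last x0 (x :: b'))), (x :: b'), p3, (c :: r2').
split => //; rewrite -sorted_nbE.
have pdir : forall (z : A) r, path (fun a b => t a == s b) z r ->
    path (nb s t) (z, true) (dir r).
  move=> z r; elim: r z => [|y r IH] z //= /andP [Hzy Hr].
  by rewrite IH // /nb /ltgt /lsrc /= Hzy /= andbF.
rewrite /= cat_path pdir //.
have -> : last (a, true) (dir r1') = last x0 (dir (a :: r1')) by [].
rewrite cat_path H1 last_rcons /=.
have Hcyc : path (nb s t) (last x b') (x :: b').
  by move: Hs; rewrite /= cat_path => /andP [_].
move: Hcyc => /= /andP [-> Hb'] /=.
rewrite cat_path Hb' /=.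
have -> : last x b' = last x0 (x :: b') by [].
rewrite -cats1 in H3; move: H3; rewrite cat_path => /andP [H3a /= /andP [H3b _]].
rewrite cat_path H3a /= H3b /=. exact: pdir.
Qed.

Lemma jump_doze (V A : finType) (s t : A -> V) rels (x y : seq (letter A))
    (ga be : A) (e m : letter A) :
  is_band s t rels x -> is_band s t rels y ->
  inI rels [:: ga; be] -> t ga = s be ->
  (be, true) \in x -> e \in x -> nb s t e m -> m \in y -> (ga, true) \in y ->
  has_DOZE s t rels.
Proof.
move=> Hx Hy HI Ht Hbe He Hem Hm Hga.
have Z : zero_rel s t rels [:: ga; be].
  by split => //; split => //; rewrite /is_path /= Ht eqxx.
have Hl : last e x \in x.
  case: x Hx He {Hbe} => [//|z x'] _ _ /=. exact: (mem_last z x').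
apply: (doze_assembly (x0 := e) Z Z Hx) => /=.
  exact: band_reach Hx Hbe Hl.
apply: reach1_trans (band_reach Hx Hl He) _.
apply: reach1_trans (reach1_edge Hem) _.
exact: band_reach Hy Hm Hga.
Qed.


Lemma out3 (V A : finType) (s t : A -> V) rels (a b c : A) :
  string_algebra s t rels -> a != b -> b != c -> c != a ->
  s a = s b -> s b = s c -> False.
Proof.
case=> _ H _ _ _ Hab Hbc Hca E1 E2.
have := H (s a); rewrite leqNgt => /negP; apply; apply/card_gt2P.
exists a, b, c; rewrite !inE E1 E2 !eqxx; split => //; split => //.
Qed.

Lemma in3 (V A : finType) (s t : A -> V) rels (a b c : A) :
  string_algebra s t rels -> a != b -> b != c -> c != a ->
  t a = t b -> t b = t c -> False.
Proof.
case=> _ _ H _ _ Hab Hbc Hca E1 E2.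
have := H (t a); rewrite leqNgt => /negP; apply; apply/card_gt2P.
exists a, b, c; rewrite !inE E1 E2 !eqxx; split => //; split => //.
Qed.

Lemma succc2 (V A : finType) (s t : A -> V) rels (g b b' : A) :
  string_algebra s t rels -> b != b' -> s b = t g -> s b' = t g ->
  ~~ inI rels [:: g; b] -> ~~ inI rels [:: g; b'] -> False.
Proof.
case=> _ _ _ H _ Hbb E1 E2 I1 I2.
have /card_le1_eqP Hc := H g.
move/eqP: Hbb; apply; apply: Hc; rewrite inE ?E1 ?E2 eqxx /=; by [].
Qed.

Lemma predc2 (V A : finType) (s t : A -> V) rels (b g g' : A) :
  string_algebra s t rels -> g != g' -> t g = s b -> t g' = s b ->
  ~~ inI rels [:: g; b] -> ~~ inI rels [:: g'; b] -> False.
Proof.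
case=> _ _ _ _ H Hgg E1 E2 I1 I2.
have /card_le1_eqP Hc := H b.
move/eqP: Hgg; apply; apply: Hc; rewrite inE ?E1 ?E2 eqxx /=; by [].
Qed.


Lemma divergence (V A : finType) (s t : A -> V) rels (l mF mH : letter A) :
  string_algebra s t rels -> nb s t l mF -> nb s t l mH -> mF != mH ->
  zok rels l mF -> zok rels l mH ->
  exists (g b : A), [/\ inI rels [:: g; b], t g = s b &
    ((mF = (b, true) /\ mH = (g, false)) \/ (mH = (b, true) /\ mF = (g, false)))].
Proof.
move=> SA.
case: l => c f; case: mF => a d; case: mH => b e.
rewrite /nb /zok /ltgt /lsrc /=.
case: f; case: d; case: e => /=; rewrite ?andbT ?andbF ?orbF /=.
- move=> /andP[/eqP E1 _] /andP[/eqP E2 _] Hab Z1 Z2; exfalso.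
  have Hab' : a != b by apply: contraNneq Hab => ->.
  exact: (succc2 SA Hab' (esym E1) (esym E2) Z1 Z2).
- move=> /andP[/eqP E1 _] /andP[/eqP E2 Hcb] _ Z1 _.
  have E3 : t b = s a by rewrite -E2.
  exists b, a; split => //; last by left.
  apply/negPn/negP => Z2. exact: (predc2 SA Hcb E1 E3 Z1 Z2).
- move=> /andP[/eqP E1 Hca] /andP[/eqP E2 _] _ _ Z2.
  have E3 : t a = s b by rewrite -E1.
  exists a, b; split => //; last by right.
  apply/negPn/negP => Z1; exact: (predc2 SA Hca E2 E3 Z2 Z1).
- move=> /andP[/eqP E1 Hca] /andP[/eqP E2 Hcb] Hab _ _; exfalso.
  have Hab' : a != b by apply: contraNneq Hab => ->.
  have Hbc : b != c by rewrite eq_sym.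
  exact: (in3 SA Hca Hab' Hbc E1 (etrans (esym E1) E2)).
- move=> /andP[/eqP E1 Hca] /andP[/eqP E2 Hcb] Hab _ _; exfalso.
  have Hab' : a != b by apply: contraNneq Hab => ->.
  have Hbc : b != c by rewrite eq_sym.
  exact: (out3 SA Hca Hab' Hbc E1 (etrans (esym E1) E2)).
- move=> /andP[/eqP E1 Hca] /andP[/eqP E2 _] _ _ Z.
  have E3 : s a = t b by rewrite -E1.
  exists b, a; split => //; last by left.
  apply/negPn/negP => Z2; exact: (succc2 SA Hca E2 E3 Z Z2).
- move=> /andP[/eqP E1 _] /andP[/eqP E2 Hcb] _ Z _.
  have E3 : s b = t a by rewrite -E2.
  exists a, b; split => //; last by right.
  apply/negPn/negP => Z2; exact: (succc2 SA Hcb E1 E3 Z Z2).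
- move=> /andP[/eqP E1 _] /andP[/eqP E2 _] Hab Z1 Z2; exfalso.
  have Hab' : a != b by apply: contraNneq Hab => ->.
  exact: (predc2 SA Hab' (esym E1) (esym E2) Z1 Z2).
Qed.


Definition pairx (X : nat) : nat := if odd X then X.-1 else X.+1.

Lemma pairxK X : X < 4 -> pairx (pairx X) = X.
Proof. by case: X => [|[|[|[|]]]]. Qed.

Lemma pairx_lt X : X < 4 -> pairx X < 4.
Proof. by case: X => [|[|[|[|]]]]. Qed.


Lemma cross_core (V A : finType) (s t : A -> V) rels (L : seq (letter A)) (x0 : letter A)
    (u : V) (Z X1 X2 : nat) :
  string_algebra s t rels -> uniq L -> size L = 4 ->
  (forall X, X < 4 -> lsrc s t (nth x0 L X) = u) ->
  Z < 4 -> X1 < 4 -> X2 < 4 -> X1 != X2 ->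
  (nth x0 L Z).2 = false -> (nth x0 L X1).2 = true -> (nth x0 L X2).2 = true ->
  exists (g b : A) (X Y : nat), [/\ X < 4, Y < 4, inI rels [:: g; b], t g = s b &
    [/\ nth x0 L X = (b, true), linv (nth x0 L (pairx Y)) = (g, true) &
        nb s t (linv (nth x0 L (pairx X))) (nth x0 L Y)]].
Proof.
move=> SA HU HS Hu HZ H1 H2 H12 EZ E1 E2.
have inj : forall X Y, X < 4 -> Y < 4 -> nth x0 L X = nth x0 L Y -> X = Y.
  by move=> X Y HX HY /eqP; rewrite nth_uniq ?HS // => /eqP.
set g := (nth x0 L Z).1.
have Eg : nth x0 L Z = (g, false) by rewrite /g; move: EZ; case: (nth x0 L Z) => c d /= ->.
have Htg : t g = u by rewrite -(Hu Z HZ) Eg.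
have main : forall X, X < 4 -> (nth x0 L X).2 = true -> inI rels [:: g; (nth x0 L X).1] ->
  exists (g' b : A) (X' Y : nat), [/\ X' < 4, Y < 4, inI rels [:: g'; b], t g' = s b &
    [/\ nth x0 L X' = (b, true), linv (nth x0 L (pairx Y)) = (g', true) &
        nb s t (linv (nth x0 L (pairx X'))) (nth x0 L Y)]].
  move=> X HX EX HI; set b := (nth x0 L X).1.
  have Eb : nth x0 L X = (b, true) by rewrite /b; move: EX; case: (nth x0 L X) => c d /= ->.
  have Hsb : s b = u by rewrite -(Hu X HX) Eb.
  exists g, b, X, (pairx Z); split => //; first exact: pairx_lt.
    by rewrite Htg Hsb.
  split => //; first by rewrite pairxK // Eg.
  rewrite /nb; apply/andP; split.
    case E: (nth x0 L (pairx X)) => [c d].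
    have Hc := Hu _ (pairx_lt HX); rewrite E in Hc.
    by rewrite (Hu _ (pairx_lt HZ)) -Hc /lsrc /ltgt /linv /=; case: (d).
  apply/negP => /andP [/eqP Ea Eb2].
  have : nth x0 L (pairx Z) = nth x0 L (pairx X).
    move: Ea Eb2; case: (nth x0 L (pairx X)) => c d; case: (nth x0 L (pairx Z)) => c' d'.
    by rewrite /linv /= => -> ; case: d; case: d'.
  move/(inj _ _ (pairx_lt HZ) (pairx_lt HX)) => E.
  have : Z = X by rewrite -(pairxK HZ) E pairxK.
  by move=> EZX; move: EZ; rewrite EZX EX.
case I1: (inI rels [:: g; (nth x0 L X1).1]); first exact: main I1.
case I2: (inI rels [:: g; (nth x0 L X2).1]); first exact: main I2.
exfalso; apply: (succc2 SA _ _ _ (negbT I1) (negbT I2)).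
- apply/eqP => E; move/eqP: H12; apply; apply: inj => //.
  move: E E1 E2; case: (nth x0 L X1) => c d; case: (nth x0 L X2) => c' d' /= -> -> ->.
  by [].
- by rewrite Htg -(Hu X1 H1); case: (nth x0 L X1) E1 => c d /= ->.
- by rewrite Htg -(Hu X2 H2); case: (nth x0 L X2) E2 => c d /= ->.
Qed.

Lemma three_same (V A : finType) (s t : A -> V) rels (L : seq (letter A)) (x0 : letter A)
    (u : V) (i j k : nat) :
  string_algebra s t rels -> uniq L -> size L = 4 ->
  (forall X, X < 4 -> lsrc s t (nth x0 L X) = u) ->
  i < 4 -> j < 4 -> k < 4 -> i != j -> j != k -> k != i ->
  (nth x0 L i).2 = (nth x0 L j).2 -> (nth x0 L j).2 = (nth x0 L k).2 -> False.
Proof.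
move=> SA HU HS Hu Hi Hj Hk Hij Hjk Hki Eij Ejk.
have inj : forall X Y, X < 4 -> Y < 4 -> nth x0 L X = nth x0 L Y -> X = Y.
  by move=> X Y HX HY /eqP; rewrite nth_uniq ?HS // => /eqP.
have ne : forall X Y, X < 4 -> Y < 4 -> X != Y -> (nth x0 L X).2 = (nth x0 L Y).2 ->
    (nth x0 L X).1 != (nth x0 L Y).1.
  move=> X Y HX HY HXY E; apply/eqP => E'; move/eqP: HXY; apply; apply: inj => //.
  by move: E E'; case: (nth x0 L X) => a b; case: (nth x0 L Y) => c d /= -> ->.
have Hi' := Hu i Hi; have Hj' := Hu j Hj; have Hk' := Hu k Hk.
move: (ne _ _ Hi Hj Hij Eij) (ne _ _ Hj Hk Hjk Ejk) (ne _ _ Hk Hi Hki (esym (etrans Eij Ejk))).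
move: Eij Ejk Hi' Hj' Hk'.
case: (nth x0 L i) => a p; case: (nth x0 L j) => b q; case: (nth x0 L k) => c r /=.
move=> -> ->; rewrite /lsrc /=; case: r => /= Ha Hb Hc H1 H2 H3.
- exact: (out3 SA H1 H2 H3 (etrans Ha (esym Hb)) (etrans Hb (esym Hc))).
- exact: (in3 SA H1 H2 H3 (etrans Ha (esym Hb)) (etrans Hb (esym Hc))).
Qed.

Ltac try_cross SA L x0 u :=
  first [ exfalso; apply: (three_same (L := L) (x0 := x0) (u := u) (i := 0) (j := 1) (k := 2) SA); solve [done | congruence]
        | exfalso; apply: (three_same (L := L) (x0 := x0) (u := u) (i := 0) (j := 1) (k := 3) SA); solve [done | congruence]
        | exfalso; apply: (three_same (L := L) (x0 := x0) (u := u) (i := 0) (j := 2) (k := 3) SA); solve [done | congruence]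
        | exfalso; apply: (three_same (L := L) (x0 := x0) (u := u) (i := 1) (j := 2) (k := 3) SA); solve [done | congruence]
        | let rec tr Zs := match Zs with
            | nil => fail
            | cons (?Z, ?X1, ?X2) ?rest =>
                first [ apply: (cross_core (u := u) (Z := Z) (X1 := X1) (X2 := X2) SA); solve [done | congruence]
                      | tr rest ]
            end in
          tr (cons (0,1,2) (cons (0,1,3) (cons (0,2,3) (cons (1,0,2) (cons (1,0,3)
             (cons (1,2,3) (cons (2,0,1) (cons (2,0,3) (cons (2,1,3) (cons (3,0,1)
             (cons (3,0,2) (cons (3,1,2) nil)))))))))))) ].

Lemma crossing (V A : finType) (s t : A -> V) rels (L : seq (letter A)) (x0 : letter A)
    (u : V) :
  string_algebra s t rels -> uniq L -> size L = 4 ->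
  (forall X, X < 4 -> lsrc s t (nth x0 L X) = u) ->
  exists (g b : A) (X Y : nat), [/\ X < 4, Y < 4, inI rels [:: g; b], t g = s b &
    [/\ nth x0 L X = (b, true), linv (nth x0 L (pairx Y)) = (g, true) &
        nb s t (linv (nth x0 L (pairx X))) (nth x0 L Y)]].
Proof.
move=> SA HU HS Hu.
case E0: (nth x0 L 0).2; case E1: (nth x0 L 1).2;
case E2: (nth x0 L 2).2; case E3: (nth x0 L 3).2; try_cross SA L x0 u.
Qed.


Definition cyc (A : finType) (x0 : letter A) (b : seq (letter A)) (k : nat) : letter A :=
  nth x0 b (k %% size b).

Lemma cyc_mem (A : finType) (x0 : letter A) b k : 0 < size b -> cyc x0 b k \in b.
Proof. by move=> H; rewrite /cyc mem_nth // ltn_pmod. Qed.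

Lemma cyc_per (A : finType) (x0 : letter A) b k c : cyc x0 b (k + c * size b) = cyc x0 b k.
Proof. by rewrite /cyc addnC modnMDl. Qed.

Lemma cyc_small (A : finType) (x0 : letter A) b k : k < size b -> cyc x0 b k = nth x0 b k.
Proof. by move=> H; rewrite /cyc modn_small. Qed.

Lemma nth_cat2 (A : finType) (x0 : letter A) (b : seq (letter A)) j :
  j < (size b).*2 -> nth x0 (b ++ b) j = nth x0 b (j %% size b).
Proof.
move=> Hj; rewrite nth_cat; case: ltnP => H; first by rewrite modn_small.
rewrite -{2}(subnK H) modnDr modn_small //.
by rewrite -(ltn_add2r (size b)) subnK // addnn.
Qed.

Lemma cyc_trans (A : finType) (x0 : letter A) (b : seq (letter A)) k :
  0 < size b -> trans b (cyc x0 b k) (cyc x0 b k.+1).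
Proof.
move=> Hn; set i := k %% size b.
have Hi : i < size b by rewrite ltn_pmod.
have Hi2 : i.+1 < (size b).*2 by have := leq_add Hi Hn; rewrite addn1 addnn.
have Hi2' : i.+1 < size (b ++ b) by rewrite size_cat addnn.
exists (take i (b ++ b)), (drop i.+2 (b ++ b)).
have -> : cyc x0 b k = nth x0 (b ++ b) i by rewrite nth_cat2 ?modn_mod // ltnW.
have -> : cyc x0 b k.+1 = nth x0 (b ++ b) i.+1.
  by rewrite nth_cat2 // /cyc /i -[(k %% size b).+1]addn1 modnDml addn1.
by rewrite -(drop_nth x0 Hi2') -(drop_nth x0 (ltnW Hi2')) cat_take_drop.
Qed.

Ltac slia := repeat match goal with
 | H : is_true (_ <= _) |- _ => move/leP in H
 | H : is_true (_ < _) |- _ => move/ltP in H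
 | |- is_true (_ <= _) => apply/leP
 | |- is_true (_ < _) => apply/ltP
 end; rewrite <- ?plusE, <- ?minusE, <- ?multE in *; lia.

Lemma nth_rot_mod (A : finType) (x0 : letter A) (f : seq (letter A)) r x :
  r <= size f -> x < size f -> nth x0 (rot r f) x = nth x0 f ((r + x) %% size f).
Proof.
move=> Hr Hx; rewrite /rot nth_cat size_drop.
case: ltnP => H.
  by rewrite nth_drop modn_small //; slia.
rewrite nth_take; last by slia.
have E : r + x = (x - (size f - r)) + size f by slia.
by rewrite E modnDr modn_small //; slia.
Qed.

Lemma band_size (V A : finType) (s t : A -> V) rels (b : seq (letter A)) :
  is_band s t rels b -> 0 < size b.
Proof. by case; case: b. Qed.

Lemma shift_period (A : finType) (x0 : letter A) (f : seq (letter A)) p d :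
  0 < size f ->
  (forall k, cyc x0 f (p + k + d) = cyc x0 f (p + k)) ->
  forall x m, cyc x0 f (x + m * d) = cyc x0 f x.
Proof.
move=> Hn H.
have Hp : p <= p * size f by rewrite leq_pmulr.
have E : forall y, y + p * size f = p + (y + p * size f - p) by move=> y; slia.
have key : forall y, cyc x0 f (y + d) = cyc x0 f y.
  move=> y; rewrite -(cyc_per x0 f y p) -(cyc_per x0 f (y + d) p).
  have -> : y + d + p * size f = (y + p * size f) + d by rewrite addnAC.
  by rewrite E H -E.
move=> x m; elim: m => [|m IH]; first by rewrite addn0.
by rewrite mulSn (addnC d) addnA key IH.
Qed.

Lemma prim_period (V A : finType) (s t : A -> V) rels (x0 : letter A) (f : seq (letter A)) p d :
  is_band s t rels f -> 0 < d -> d %| size f ->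
  (forall k, cyc x0 f (p + k + d) = cyc x0 f (p + k)) -> size f = d.
Proof.
move=> Hb Hd Hdv H.
have Hn := band_size Hb.
have Hper := shift_period Hn H.
have Hdn : d <= size f by apply: dvdn_leq.
have Ef : f = wpow (take d f) (size f %/ d).
  apply: (@eq_from_nth _ x0).
    by rewrite size_wpow size_take_min (minn_idPl Hdn) divnK.
  move=> i Hi; rewrite nth_wpow; last first.
    by rewrite size_take_min (minn_idPl Hdn) divnK.
  rewrite size_take_min (minn_idPl Hdn) nth_take ?ltn_pmod //.
  rewrite -(cyc_small x0 Hi) -(cyc_small x0 (leq_trans (ltn_pmod i Hd) Hdn)).
  by rewrite {1}(divn_eq i d) addnC Hper.
case: Hb => _ _ _ Hp.
have Hq : 0 < size f %/ d by rewrite divn_gt0.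
case: (ltngtP (size f %/ d) 1) => Hc.
- by move: Hq; rewrite ltnNge -ltnS Hc.
- by exfalso; apply: Hp; exists (take d f), (size f %/ d); split.
- by rewrite -(divnK Hdv) Hc mul1n.
Qed.

Lemma agree_rot (V A : finType) (s t : A -> V) rels (x0 : letter A) (f h : seq (letter A)) p q :
  is_band s t rels f -> is_band s t rels h ->
  (forall k, cyc x0 f (p + k) = cyc x0 h (q + k)) -> exists r, h = rot r f.
Proof.
move=> Hf Hh Hag.
have Hnf := band_size Hf; have Hnh := band_size Hh.
set W := fun k => cyc x0 f (p + k).
have Wf : forall k c, W (k + c * size f) = W k by move=> k c; rewrite /W addnA cyc_per.
have Wh : forall k c, W (k + c * size h) = W k.
  by move=> k c; rewrite /W !Hag addnA cyc_per.
set d := gcdn (size f) (size h).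
have Hd : 0 < d by rewrite gcdn_gt0 Hnf.
have [a _ Ha] := Bezoutl (size h) Hnf.
have Wd : forall k, W (k + d) = W k.
  by move=> k; rewrite -(Wh (k + d) a) -addnA -(divnK Ha) Wf.
have Ef : size f = d.
  apply: (prim_period (x0 := x0) (p := p) Hf Hd (dvdn_gcdl _ _)) => k.
  by have := Wd k; rewrite /W addnA.
have Eh : size h = d.
  apply: (prim_period (x0 := x0) (p := q) Hh Hd (dvdn_gcdr _ _)) => k.
  by have := Wd k; rewrite /W !Hag addnA.
exists ((p + (q * d - q)) %% d).
apply: (@eq_from_nth _ x0); first by rewrite size_rot Ef Eh.
move=> x; rewrite Eh => Hx.
rewrite nth_rot_mod; last by rewrite Ef.
2: by rewrite Ef ltnW // ltn_pmod.
have Hq : q <= q * d by rewrite leq_pmulr.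
rewrite -(cyc_small x0 (b := h) (k := x)) ?Eh // -(cyc_per x0 h x q) Eh.
have -> : x + q * d = q + (x + q * d - q) by slia.
rewrite -Hag /cyc Ef modnDml.
have -> : p + (x + q * d - q) = p + (q * d - q) + x by slia.
by [].
Qed.


Lemma conv_nb (V A : finType) (s t : A -> V) (a a' c : letter A) :
  nb s t a c -> nb s t a' c -> a != a' -> nb s t a (linv a').
Proof.
case: a => x d; case: a' => y e; rewrite /nb /linv /lsrc /ltgt /=.
move=> /andP [/eqP E1 _] /andP [/eqP E2 _] Hne.
apply/andP; split; first by rewrite E1 -E2; case: (e).
apply/negP => /andP [/eqP Exy Hde]; move/eqP: Hne; apply.
by rewrite Exy; move: Hde; case: (d); case: (e).
Qed.

Lemma shared_letter (V A : finType) (s t : A -> V) rels (x0 : letter A)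
    (f h : seq (letter A)) p q :
  string_algebra s t rels -> ~ has_DOZE s t rels ->
  is_band s t rels f -> is_band s t rels h ->
  cyc x0 f p = cyc x0 h q -> forall k, cyc x0 f (p + k) = cyc x0 h (q + k).
Proof.
move=> SA nD Hf Hh E0.
have Hnf := band_size Hf; have Hnh := band_size Hh.
set N := size f * size h.
have HN : 0 < N by rewrite muln_gt0 Hnf.
have perN : forall k, cyc x0 f (p + k) = cyc x0 f (p + k %% N) /\
                      cyc x0 h (q + k) = cyc x0 h (q + k %% N).
  move=> k; rewrite {1 3}(divn_eq k N) /N.
  split.
  - by rewrite [size f * _]mulnC mulnA addnA addnAC cyc_per.
  - by rewrite mulnA addnA addnAC cyc_per.
case: (boolP [exists k : 'I_N, cyc x0 f (p + k) != cyc x0 h (q + k)]); last first.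
  move/existsPn => Hall k.
  have [-> ->] := perN k.
  by apply/eqP; have := Hall (Ordinal (ltn_pmod k HN)); rewrite negbK.
case/existsP => k0 Hk0; exfalso; apply: nD.
pose P := fun j => (j < N) && (cyc x0 f (p + j) != cyc x0 h (q + j)).
have exP : exists j, P j by exists k0; rewrite /P ltn_ord Hk0.
have ubP : forall j, P j -> j <= N by move=> j /andP [/ltnW].
case: (ex_minnP exP) => k1 /andP [Hk1N Hk1] Hmin.
case: (ex_maxnP exP ubP) => k2 /andP [Hk2N Hk2] Hmax.
have Hk1pos : 0 < k1 by case: k1 Hk1 {Hk1N Hmin} => //; rewrite !addn0 E0 eqxx.
have Hagree1 : cyc x0 f (p + k1.-1) = cyc x0 h (q + k1.-1).
  apply/eqP; apply/negPn/negP => H.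
  have : k1 <= k1.-1 by apply: Hmin; rewrite /P H andbT (leq_ltn_trans (leq_pred _) Hk1N).
  by case: (k1) Hk1pos => // n _; rewrite ltnn.
have Hk1S : forall r, (r + k1.-1).+1 = r + k1 by move=> r; rewrite -addnS prednK.
have [nF zF _ _] := band_trans Hf (cyc_trans x0 (p + k1.-1) Hnf).
have [nH zH _ _] := band_trans Hh (cyc_trans x0 (q + k1.-1) Hnh).
rewrite Hk1S in nF zF; rewrite Hk1S in nH zH.
rewrite Hagree1 in nF zF.
have [g [b [HI Htg Hcase]]] := divergence SA nF nH Hk1 zF zH.
have Hagree2 : cyc x0 f (p + k2.+1) = cyc x0 h (q + k2.+1).
  case: (ltngtP k2.+1 N) => HN2.
  - apply/eqP; apply/negPn/negP => H.
    have : k2.+1 <= k2 by apply: Hmax; rewrite /P H HN2.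
    by rewrite ltnn.
  - by move: HN2; rewrite ltnNge Hk2N.
  - have [-> ->] := perN k2.+1; by rewrite HN2 modnn !addn0.
have [cF _ _ _] := band_trans Hf (cyc_trans x0 (p + k2) Hnf).
have [cH _ _ _] := band_trans Hh (cyc_trans x0 (q + k2) Hnh).
rewrite -!addnS Hagree2 in cF; rewrite -!addnS in cH.
have j1 := conv_nb cF cH Hk2.
have j2 := conv_nb cH cF (negbT (contraNF (fun e => introT eqP (esym (eqP e))) Hk2)).
have Hif := band_inv Hf; have Hih := band_inv Hh.
case: Hcase => [[EF EH] | [EH EF]].
- apply: (jump_doze Hf Hih HI Htg _ (cyc_mem x0 _ Hnf) j1).
  + by rewrite -EF cyc_mem.
  + by rewrite mem_inv_walk cyc_mem.
  + by have := cyc_mem x0 (q + k1) Hnh; rewrite -mem_inv_walk EH.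
- apply: (jump_doze Hh Hif HI Htg _ (cyc_mem x0 _ Hnh) j2).
  + by rewrite -EH cyc_mem.
  + by rewrite mem_inv_walk cyc_mem.
  + by have := cyc_mem x0 (p + k1) Hnf; rewrite -mem_inv_walk EF.
Qed.


Lemma pred_trans (V A : finType) (s t : A -> V) rels (b : seq (letter A)) m :
  is_band s t rels b -> m \in b -> exists e, trans b e m.
Proof.
move=> Hb Hm; have Hn := band_size Hb.
exists (cyc m b (index m b + size b).-1).
have := cyc_trans m (index m b + size b).-1 Hn.
rewrite prednK ?addn_gt0 ?Hn ?orbT //.
by rewrite -[size b]mul1n cyc_per (@cyc_small _ m b (index m b)) ?index_mem // nth_index.
Qed.

Lemma equiv_of_shared (V A : finType) (s t : A -> V) rels (f h : seq (letter A)) x :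
  string_algebra s t rels -> ~ has_DOZE s t rels ->
  is_band s t rels f -> is_band s t rels h -> x \in f -> x \in h ->
  exists r, h = rot r f.
Proof.
move=> SA nD Hf Hh Hxf Hxh.
apply: (agree_rot (x0 := x) (p := index x f) (q := index x h) Hf Hh).
apply: (shared_letter SA nD Hf Hh).
by rewrite !cyc_small ?index_mem // !nth_index.
Qed.

Lemma main_equiv (V A : finType) (s t : A -> V) rels (b1 b2 : seq (letter A)) u :
  string_algebra s t rels -> ~ has_DOZE s t rels ->
  is_band s t rels b1 -> is_band s t rels b2 ->
  u \in verts s t b1 -> u \in verts s t b2 -> band_equiv b1 b2.
Proof.
move=> SA nD H1 H2 /mapP [m1 Hm1 Eu1] /mapP [m2 Hm2 Eu2].
have [l1 T1] := pred_trans H1 Hm1.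
have [l2 T2] := pred_trans H2 Hm2.
have [nb1 _ Hl1 _] := band_trans H1 T1.
have [nb2 _ Hl2 _] := band_trans H2 T2.
have Hi1 := band_inv H1; have Hi2 := band_inv H2.
have fromI : forall r, inv_walk b2 = rot r b1 -> band_equiv b1 b2.
  move=> r E; exists (size b1 - r); right.
  by rewrite -inv_rot -E inv_walkK.
case E1: (m1 == m2).
  have Hm1' : m1 \in b2 by rewrite (eqP E1).
  have [r Er] := equiv_of_shared SA nD H1 H2 Hm1 Hm1'.
  by exists r; left.
case E2: (l1 == l2).
  have Hl1' : l1 \in b2 by rewrite (eqP E2).
  have [r Er] := equiv_of_shared SA nD H1 H2 Hl1 Hl1'.
  by exists r; left.
case E3: (m1 == linv l2).
  have Hm1' : m1 \in inv_walk b2 by rewrite (eqP E3) mem_inv_walk.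
  have [r Er] := equiv_of_shared SA nD H1 Hi2 Hm1 Hm1'.
  exact: fromI Er.
case E4: (linv l1 == m2).
  have Hl1' : l1 \in inv_walk b2 by rewrite -(linvK l1) mem_inv_walk (eqP E4).
  have [r Er] := equiv_of_shared SA nD H1 Hi2 Hl1 Hl1'.
  exact: fromI Er.
exfalso; apply: nD.
set L := [:: m1; linv l1; m2; linv l2].
have nbk : forall l m, nb s t l m -> m != linv l.
  move=> [a d] [c e] /andP [_]; rewrite /linv /=.
  by apply: contra => /eqP [-> ->]; rewrite eqxx /=; case: (d).
have linv_inj : forall a b : letter A, (linv a == linv b) = (a == b).
  by move=> [a d] [c e]; rewrite /linv /= !xpair_eqE; case: (d); case: (e).
have HU : uniq L.
  by rewrite /L /= !inE !negb_or (nbk _ _ nb1) (nbk _ _ nb2) E1 E3 E4 linv_inj E2.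
have Hu : forall X, X < 4 -> lsrc s t (nth m1 L X) = u.
  have Hl1u : ltgt s t l1 = u by rewrite Eu1; case/andP: nb1 => /eqP.
  have Hl2u : ltgt s t l2 = u by rewrite Eu2; case/andP: nb2 => /eqP.
  move=> [|[|[|[|]]]] //= _.
  - by rewrite -Hl1u /lsrc /ltgt /linv /=; case: (l1.2).
  - by rewrite -Hl2u /lsrc /ltgt /linv /=; case: (l2.2).
have [g [b [X [Y [HX HY HI Htg [EX EY Hnb]]]]]] := crossing SA HU (erefl _) Hu.
set B := fun X => nth b1 [:: b1; inv_walk b1; b2; inv_walk b2] X.
have slot : forall X, X < 4 ->
    [/\ is_band s t rels (B X), nth m1 L X \in B X & linv (nth m1 L (pairx X)) \in B X].
  move=> [|[|[|[|]]]] //= _; rewrite /B /=; split => //; rewrite ?linvK ?mem_inv_walk //.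
have [BX HX1 HX2] := slot X HX.
have [BY HY1 HY2] := slot Y HY.
rewrite EX in HX1; rewrite EY in HY2.
exact: (jump_doze BX BY HI Htg HX1 HX2 Hnb HY1 HY2).
Qed.

Unset Implicit Arguments.

Theorem lemma2p1 (V A : finType) (s t : A -> V) (rels : seq (seq A)) :
  string_algebra s t rels ->
  ~ has_DOZE s t rels ->
  forall b1 b2 : seq (A * bool),
    is_band s t rels b1 -> is_band s t rels b2 ->
    ~ band_equiv b1 b2 ->
    #|[set v : V | (v \in verts s t b1) && (v \in verts s t b2)]| <= 1.
Proof.
move=> SA nD b1 b2 H1 H2 nE.
suff -> : [set v : V | (v \in verts s t b1) && (v \in verts s t b2)] = set0 by rewrite cards0.
apply/setP => v; rewrite !inE; apply/negP => /andP [Hv1 Hv2].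
exact: nE (main_equiv SA nD H1 H2 Hv1 Hv2).
Qed.
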